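(* Let $D_{\mathrm{jnt}}$ be any distribution of $(\mathsf X,\bar{\mathsf Y},\mathsf Y)$ on $\mathcal X\times\{0,1\}\times\{0,1\}$, let $c,\bar c\in[0,1]$ and $\lambda\in\mathbb R$. Define $s^*(x)=\eta(x)-c-\lambda\,(\eta_{\mathrm{DP}}(x)-\bar c)$ for $x\in\mathcal X$. Then the set of minimisers over measurable $f\colon\mathcal X\to[0,1]$ of $$R_{\mathrm{full}}(f)=\mathrm{CS}(f;D,c)-\lambda\,\mathrm{CS}(f;\bar D_{\mathrm{DP}},\bar c)$$ is exactly the set of $f^*$ such that, for $P_{\mathsf X}$-almost every $x$ with $s^*(x)\neq0$, $f^*(x)=\mathbf 1[s^*(x)>0]$.
   Context: $D$ is the law of $(\mathsf X,\mathsf Y)$ and $\bar D_{\mathrm{DP}}$ the law of $(\mathsf X,\bar{\mathsf Y})$ under $D_{\mathrm{jnt}}$; $P_{\mathsf X}$ is the marginal of $\mathsf X$. $\eta(x)=\Pr(\mathsf Y=1\mid\mathsf X=x)$, $\eta_{\mathrm{DP}}(x)=\Pr(\bar{\mathsf Y}=1\mid \mathsf X=x)$. A randomised classifier $f\colon\mathcal X\to[0,1]$ predicts $1$ on $x$ with probability $f(x)$. For a distribution $E$ of $(\mathsf X,\mathsf Z)$ on $\mathcal X\times\{0,1\}$ with $p=\Pr(\mathsf Z=1)$: $\mathrm{FNR}(f;E)=\mathbb E_{\mathsf X\mid \mathsf Z=1}[1-f(\mathsf X)]$, $\mathrm{FPR}(f;E)=\mathbb E_{\mathsf X\mid\mathsf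 Z=0}[f(\mathsf X)]$, and the cost-sensitive risk is $\mathrm{CS}(f;E,c)=p(1-c)\,\mathrm{FNR}(f;E)+(1-p)c\,\mathrm{FPR}(f;E)$. *)

(* Defs.v *)
From HB Require Import structures.
From mathcomp Require Import all_boot all_order all_algebra.
From mathcomp Require Import all_classical all_reals all_analysis.
Set Implicit Arguments. Unset Strict Implicit. Unset Printing Implicit Defensive.
Import Order.TTheory GRing.Theory Num.Theory.
Local Open Scope classical_set_scope.
Local Open Scope ring_scope.

(* The joint law D_jnt of (X, Ybar, Y) is realised on a probability space
   (Omega, P): X : Omega -> T measurable, and the events [Ybar = 1] = Yb1,
   [Y = 1] = Y1.  A distribution E of (X, Z) is given by the pair (X, Z1),
   Z1 the event [Z = 1]. *)

Section defs.
Context {dO dT : measure_display} {Omega : measurableType dO}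
  {T : measurableType dT} {R : realType}.
Variables (P : probability Omega R) (X : Omega -> T).

Definition pZ (Z1 : set Omega) : R := fine (P Z1).

Definition FNR (f : T -> R) (Z1 : set Omega) : R :=
  Rintegral P Z1 (fun w => 1 - f (X w)) / pZ Z1.

Definition FPR (f : T -> R) (Z1 : set Omega) : R :=
  Rintegral P (~` Z1) (fun w => f (X w)) / (1 - pZ Z1).

Definition CS (f : T -> R) (Z1 : set Omega) (c : R) : R :=
  pZ Z1 * (1 - c) * FNR f Z1 + (1 - pZ Z1) * c * FPR f Z1.

(* eta is (a version of) the regression function x |-> Pr(Z = 1 | X = x):
   measurable, and Pr(X in A, Z = 1) = E[eta(X) ; X in A] for measurable A. *)
Definition is_cond_prob (Z1 : set Omega) (eta : T -> R) : Prop :=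
  measurable_fun setT eta /\
  forall A : set T, measurable A ->
    fine (P (X @^-1` A `&` Z1)) = Rintegral P (X @^-1` A) (fun w => eta (X w)).

Definition classifier (f : T -> R) : Prop :=
  measurable_fun setT f /\ forall x, 0 <= f x <= 1.

Definition Rfull (Y1 Yb1 : set Omega) (c cbar lambda : R) (f : T -> R) : R :=
  CS f Y1 c - lambda * CS f Yb1 cbar.

Definition is_minimiser (Y1 Yb1 : set Omega) (c cbar lambda : R)
    (f : T -> R) : Prop :=
  classifier f /\
  forall g, classifier g -> Rfull Y1 Yb1 c cbar lambda f <= Rfull Y1 Yb1 c cbar lambda g.

End defs.

(* Main.v *)
Require Import Defs.
From HB Require Import structures.
From mathcomp Require Import all_boot all_order all_algebra.
From mathcomp Require Import all_classical all_reals all_analysis.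
From mathcomp Require Import measurable_realfun.
From mathcomp Require Import ring lra.
Import Order.TTheory GRing.Theory Num.Theory.
Local Open Scope classical_set_scope.
Local Open Scope ring_scope.
Section dens.
Context {dO dT : measure_display} {Omega : measurableType dO}
  {T : measurableType dT} {R : realType}.
Variables (P : probability Omega R) (X : Omega -> T) (mX : measurable_fun setT X).
Local Open Scope ereal_scope.
Import HBNNSimple.

Lemma mpre {B : set T} : measurable B -> measurable (X @^-1` B).
Proof. by move=> mB; rewrite -[X in measurable X]setTI; exact: mX. Qed.

Lemma dens_int (Z1 : set Omega) (mZ1 : measurable Z1) (a : T -> R)
  (ma : measurable_fun setT a) (a0 : forall x, (0 <= a x)%R)
  (ha : forall B, measurable B ->
     P (X @^-1` B `&` Z1) = \int[P]_(w in X @^-1` B) (a (X w))%:E)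
  (g : T -> R) (mg : measurable_fun setT g) (g0 : forall x, (0 <= g x)%R) :
  \int[P]_(w in Z1) (g (X w))%:E = \int[P]_w ((a (X w)) * g (X w))%:E.
Proof.
have mgE : measurable_fun [set: T] ((fun x => (g x)%:E) : T -> \bar R) by exact/measurable_EFinP.
pose h := nnsfun_approx measurableT mgE.
have hcvg x : (fun n => (h n x)%:E) @ \oo --> (g x)%:E.
  by apply: (cvg_nnsfun_approx measurableT mgE) => // y _; rewrite lee_fin.
have mh n : measurable_fun setT (h n) by exact: measurable_funPT.
have mhX n : measurable_fun setT (fun w => h n (X w)).
  exact: measurableT_comp.
have maX : measurable_fun setT (fun w => a (X w)) by exact: measurableT_comp.
have nd x : {homo (fun n => (h n x)%:E) : n m / (n <= m)%N >-> n <= m}.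
  by move=> n m nm; rewrite lee_fin; exact/lefP/nd_nnsfun_approx.
transitivity (limn (fun n => \int[P]_(w in Z1) (h n (X w))%:E)).
  rewrite -monotone_convergence //.
  - by apply: eq_integral => w _; apply/esym/cvg_lim => //; exact: hcvg.
  - by move=> n; apply/measurable_EFinP; exact: measurable_funTS.
  all: try by move=> n w _; rewrite lee_fin.
  all: try by move=> w _; exact: nd.
transitivity (limn (fun n => \int[P]_w (a (X w) * h n (X w))%:E)); last first.
  rewrite -monotone_convergence //.
  - apply: eq_integral => w _; apply/cvg_lim => //.
    rewrite EFinM; under eq_fun do rewrite EFinM.
    by apply: cvgeZl => //; exact: hcvg.
  - by move=> n; apply/measurable_EFinP; exact: measurable_funM.
  all: try by move=> n w _; rewrite lee_fin mulr_ge0.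
  all: try by move=> w _ n m nm; rewrite lee_fin ler_wpM2l //; exact/lefP/nd_nnsfun_approx.
congr (limn _); apply/funext => n.
have hge y w : (0 <= y * \1_(X @^-1` (h n @^-1` [set y])) w)%R.
  have := nnfun_muleindic_ge0 (h n) y (X w).
  by rewrite -EFinM lee_fin.
have fr : finite_set (range (h n)) by exact: fimfunP.
have mind y : measurable (X @^-1` (h n @^-1` [set y])).
  by apply: mpre; exact: measurable_sfunP.
transitivity (\int[P]_(w in Z1) (\sum_(y \in range (h n))
    (y * \1_(X @^-1` (h n @^-1` [set y])) w)%:E)).
  by apply: eq_integral => w _; rewrite fimfunE fsumEFin.
transitivity (\int[P]_w (\sum_(y \in range (h n))
    (a (X w))%:E * (y * \1_(X @^-1` (h n @^-1` [set y])) w)%:E)); last first.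
  apply: eq_integral => w _; rewrite fimfunE EFinM -fsumEFin // ge0_mule_fsumr //.
  by move=> y; rewrite lee_fin; exact: (hge y w).
rewrite ge0_integral_fsum //; last first.
  all: try by move=> y w _; rewrite lee_fin.
  all: try by move=> y; apply/measurable_EFinP; apply: measurable_funM => //; exact: measurable_indic.
rewrite ge0_integral_fsum //; last first.
  all: try by move=> y w _; rewrite mule_ge0 // lee_fin.
  all: try by move=> y; apply: emeasurable_funM; [exact/measurable_EFinP|apply/measurable_EFinP; apply: measurable_funM => //; exact: measurable_indic].
apply: eq_fsbigr => y /[!inE] yr.
have y0 : (0 <= y)%R by case: yr => t _ <-.
under eq_integral do rewrite EFinM.
rewrite ge0_integralZl //; last first.
  all: try by rewrite lee_fin.
  all: try by move=> w _; rewrite lee_fin.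
  all: try exact/measurable_EFinP/measurable_indic.
under [RHS]eq_integral do rewrite EFinM muleCA.
rewrite ge0_integralZl //; last first.
  all: try by rewrite lee_fin.
  all: try by move=> w _; rewrite mule_ge0 // lee_fin.
  all: try by apply: emeasurable_funM; [exact/measurable_EFinP| exact/measurable_EFinP/measurable_indic].
congr (_ * _).
rewrite integral_indic //.
transitivity (\int[P]_(w in X @^-1` (h n @^-1` [set y])) (a (X w))%:E).
  by apply: ha; exact: measurable_sfunP.
rewrite [RHS](eq_integral ((fun w => (a (X w))%:E) \_ (X @^-1` (h n @^-1` [set y])))).
  by rewrite -integral_mkcondr setTI.
by move=> w _; rewrite epatch_indic.
Qed.

Lemma bint (D : set Omega) (mD : measurable D) (f : Omega -> R)
  (mf : measurable_fun D f) (M : R) (hM : forall w, D w -> (`|f w| <= M)%R) :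
  P.-integrable D (EFin \o f).
Proof.
apply: measurable_bounded_integrable => //.
  by rewrite (le_lt_trans (probability_le1 P mD)) // ltry.
exists M; split; first exact: num_real.
by move=> y My x Dx; rewrite /= (le_trans (hM x Dx)) // ltW.
Qed.

Lemma null_pos (D : set Omega) (mD : measurable D) (f : Omega -> R)
  (mf : measurable_fun D f) (M : R) (fpos : forall w, D w -> (0 < f w)%R)
  (fM : forall w, D w -> (f w <= M)%R) (hI : (Rintegral P D f <= 0)%R) :
  P D = 0.
Proof.
have fi : P.-integrable D (EFin \o f).
  apply: (@bint D mD f mf M) => w Dw.
  by rewrite ger0_norm ?fM // ltW // fpos.
have i0 : 0 <= \int[P]_(w in D) (f w)%:E.
  by apply: integral_ge0 => w Dw; rewrite lee_fin ltW // fpos.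
have iE : \int[P]_(w in D) (f w)%:E = 0.
  have fin := integrable_fin_num mD fi.
  apply/eqP; rewrite eq_le i0 andbT.
  by rewrite -(fineK fin) lee_fin.
have : \int[P]_(w in D) `|(f w)%:E| = 0.
  rewrite -iE; apply: eq_integral => w /[!inE] Dw.
  by rewrite gee0_abs // lee_fin ltW // fpos.
move/(ae_eq_integral_abs P mD (proj2 (measurable_EFinP _ _) mf)).
move=> [N [mN PN0 sN]].
apply/eqP; rewrite -measure_le0 -PN0 le_measure ?inE //.
move=> w Dw; apply: sN => /= /(_ Dw) /eqP.
by rewrite eqe gt_eqF // fpos.
Qed.

Lemma mpreT (f : T -> R) (mf : measurable_fun setT f) (A : set R) :
  measurable A -> measurable (X @^-1` (f @^-1` A)).
Proof.
move=> mA; apply: mpre; rewrite -[X in measurable X]setTI; exact: mf.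
Qed.

Local Close Scope ereal_scope.
Lemma cond_neg (Z1 : set Omega) (mZ1 : measurable Z1) (eta : T -> R)
  (h : is_cond_prob P X Z1 eta) :
  P (X @^-1` (eta @^-1` `]-oo, 0[)) = 0%E.
Proof.
case: h => meta hint.
have meX : measurable_fun setT (fun w => eta (X w)) by exact: measurableT_comp.
have mD n : measurable (X @^-1` (eta @^-1` `[(- n%:R)%R, 0%R[)).
  exact: mpreT.
have D0 n : P (X @^-1` (eta @^-1` `[(- n%:R)%R, 0%R[)) = 0%E.
  apply: (@null_pos _ (mD n) (fun w => - eta (X w))%R _ n%:R).
  - exact/measurable_funTS/(measurable_funN meX).
  - by move=> w /=; rewrite in_itv /= => /andP[_]; rewrite oppr_gt0.
  - by move=> w /=; rewrite in_itv /= => /andP[+ _]; rewrite lerNl.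
  - rewrite (@eq_Rintegral _ _ _ P _ (fun w => -1 * eta (X w))%R); last first.
      by move=> w _; rewrite mulN1r.
    rewrite RintegralZl //; last first.
      apply: (@bint _ (mD n) _ _ n%:R).
        exact: measurable_funTS.
      move=> w /=; rewrite in_itv /= => /andP[h1 h2].
      by rewrite ltr0_norm // lerNl.
    rewrite mulN1r oppr_le0 -hint; last first.
      by rewrite -[X in measurable X]setTI; exact: meta.
    exact: fine_ge0.
have -> : X @^-1` (eta @^-1` `]-oo, 0[) =
    \bigcup_n X @^-1` (eta @^-1` `[(- n%:R)%R, 0%R[).
  apply/seteqP; split => w /=.
    rewrite in_itv /= => e0.
    exists (Num.bound (- eta (X w)))%R => //=.
    rewrite in_itv /= e0 andbT lerNl ltW //.
    by apply: archi_boundP; rewrite oppr_ge0 ltW.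
  by move=> [n _] /=; rewrite !in_itv /= => /andP[_ ->].
have mU : measurable (\bigcup_n X @^-1` (eta @^-1` `[(- n%:R)%R, 0%R[)).
  exact: bigcupT_measurable.
apply: (proj1 (negligibleP P mU)).
by apply: negligible_bigcup => n; exact: (proj2 (negligibleP P (mD n)) (D0 n)).
Qed.

Lemma cond_gt1 (Z1 : set Omega) (mZ1 : measurable Z1) (eta : T -> R)
  (h : is_cond_prob P X Z1 eta) :
  P (X @^-1` (eta @^-1` `]1, +oo[)) = 0%E.
Proof.
case: h => meta hint.
have meX : measurable_fun setT (fun w => eta (X w)) by exact: measurableT_comp.
have mD n : measurable (X @^-1` (eta @^-1` `]1%R, n%:R])).
  exact: mpreT.
have D0 n : P (X @^-1` (eta @^-1` `]1%R, n%:R])) = 0%E.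
  apply: (@null_pos _ (mD n) (fun w => eta (X w) - 1)%R _ n%:R).
  - by apply/measurable_funTS/measurable_funB => //; exact: measurable_cst.
  - by move=> w /=; rewrite in_itv /= => /andP[+ _]; rewrite subr_gt0.
  - move=> w /=; rewrite in_itv /= => /andP[_ h2].
    by rewrite lerBlDr (le_trans h2) // lerDl.
  - have ie : P.-integrable (X @^-1` (eta @^-1` `]1%R, n%:R])) (EFin \o (fun w => eta (X w))).
      apply: (@bint _ (mD n) _ _ n%:R); first exact: measurable_funTS.
      move=> w /=; rewrite in_itv /= => /andP[h1 h2].
      by rewrite ger0_norm // (le_trans _ (ltW h1)).
    have i1 : P.-integrable (X @^-1` (eta @^-1` `]1%R, n%:R])) (EFin \o (fun w => 1%R)).
      apply: (@bint _ (mD n) _ _ 1%R); first exact: measurable_cst.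
      by move=> w _; rewrite normr1.
    rewrite RintegralB // Rintegral_cst // mul1r subr_le0 -hint; last first.
      by rewrite -[X in measurable X]setTI; exact: meta.
    rewrite fine_le //.
    all: try by apply: fin_num_measure => //; exact: measurableI.
    by rewrite le_measure ?inE //; exact: measurableI.
have -> : X @^-1` (eta @^-1` `]1, +oo[) =
    \bigcup_n X @^-1` (eta @^-1` `]1%R, n%:R]).
  apply/seteqP; split => w /=.
    rewrite in_itv /= andbT => e1.
    exists (Num.bound (eta (X w)))%R => //=.
    rewrite in_itv /= e1 /= ltW //.
    by apply: archi_boundP; rewrite (le_trans _ (ltW e1)).
  by move=> [n _] /=; rewrite !in_itv /= andbT => /andP[-> _].
have mU : measurable (\bigcup_n X @^-1` (eta @^-1` `]1%R, n%:R])).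
  exact: bigcupT_measurable.
apply: (proj1 (negligibleP P mU)).
by apply: negligible_bigcup => n; exact: (proj2 (negligibleP P (mD n)) (D0 n)).
Qed.

Local Open Scope ereal_scope.
Definition clamp (eta : T -> R) : T -> R := (cst 0%R) \max (eta \min cst 1%R).

Lemma clamp_ge0 eta x : (0 <= clamp eta x)%R.
Proof. by rewrite /clamp /= le_max lexx. Qed.

Lemma clamp_le1 eta x : (clamp eta x <= 1)%R.
Proof. by rewrite /clamp /= ge_max ler01 ge_min lexx orbT. Qed.

Lemma clampE eta x : (0 <= eta x <= 1)%R -> clamp eta x = eta x.
Proof.
by case/andP => h0 h1; rewrite /clamp /= (min_l h1) (max_r h0).
Qed.

Lemma measurable_clamp eta : measurable_fun setT eta ->
  measurable_fun setT (clamp eta).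
Proof.
move=> me; apply: measurable_maxr; first exact: measurable_cst.
by apply: measurable_minr => //; exact: measurable_cst.
Qed.

Definition badset (eta : T -> R) : set T :=
  eta @^-1` `]-oo, 0%R[ `|` eta @^-1` `]1%R, +oo[.

Lemma measurable_badset eta : measurable_fun setT eta -> measurable (badset eta).
Proof.
move=> me; apply: measurableU; rewrite -[X in measurable X]setTI; exact: me.
Qed.

Lemma notbad eta x : ~ badset eta x -> (0 <= eta x <= 1)%R.
Proof.
rewrite /badset /= !in_itv /= andbT => /not_orP[h0 h1].
by apply/andP; split; rewrite leNgt; apply/negP.
Qed.

Lemma null_badset (Z1 : set Omega) (mZ1 : measurable Z1) (eta : T -> R)
  (h : is_cond_prob P X Z1 eta) : P (X @^-1` badset eta) = 0%E.
Proof.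
have me := h.1.
have mA : measurable (X @^-1` (eta @^-1` `]-oo, 0%R[)) by apply: mpreT.
have mB : measurable (X @^-1` (eta @^-1` `]1%R, +oo[)) by apply: mpreT.
apply: (proj1 (negligibleP P (mpre (@measurable_badset eta me)))).
rewrite /badset preimage_setU; apply: negligibleU.
  exact: (proj2 (negligibleP P mA) (@cond_neg Z1 mZ1 eta h)).
exact: (proj2 (negligibleP P mB) (@cond_gt1 Z1 mZ1 eta h)).
Qed.

Lemma cond_clamp (Z1 : set Omega) (mZ1 : measurable Z1) (eta : T -> R)
  (h : is_cond_prob P X Z1 eta) (B : set T) : measurable B ->
  P (X @^-1` B `&` Z1) = \int[P]_(w in X @^-1` B) (clamp eta (X w))%:E.
Proof.
move=> mB; have [me hint] := h.
have mXB := mpre mB.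
have mc : measurable_fun setT (fun w => clamp eta (X w)).
  exact: measurableT_comp (@measurable_clamp eta me) mX.
have meX : measurable_fun setT (fun w => eta (X w)) by exact: measurableT_comp.
have ci : P.-integrable (X @^-1` B) (EFin \o (fun w => clamp eta (X w))).
  apply: (@bint _ mXB _ _ 1%R); first exact: measurable_funTS.
  by move=> w _; rewrite ger0_norm ?clamp_ge0 // clamp_le1.
have fin := integrable_fin_num mXB ci.
have ae : \int[P]_(w in X @^-1` B) (clamp eta (X w))%:E =
          \int[P]_(w in X @^-1` B) (eta (X w))%:E.
  apply: ae_eq_integral => //.
  - exact/measurable_EFinP/measurable_funTS.
  - exact/measurable_EFinP/measurable_funTS.
  - exists (X @^-1` badset eta); split.
    + exact: mpre (@measurable_badset eta me).
    + exact: (@null_badset Z1 mZ1 eta h).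
    + move=> w /= /not_implyP [_ hw]; apply: contrapT => nb; apply: hw.
      by rewrite clampE // notbad.
have := hint B mB; rewrite /Rintegral -ae => hf.
by rewrite -(fineK fin) -hf fineK // fin_num_measure //; exact: measurableI.
Qed.

Local Close Scope ereal_scope.

Definition bnd (h : Omega -> R) :=
  measurable_fun setT h /\ exists M, forall w, `|h w| <= M.

Lemma bnd_int {D : set Omega} (mD : measurable D) {h} : bnd h ->
  P.-integrable D (EFin \o h).
Proof.
case=> mh [M hM]; apply: (@bint _ mD _ _ M) => //; exact: measurable_funTS.
Qed.

Lemma bnd_cst r : bnd (fun => r).
Proof. by split; [exact: measurable_cst | exists `|r|]. Qed.

Lemma bndD {h1 h2} : bnd h1 -> bnd h2 -> bnd (fun w => h1 w + h2 w).
Proof.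
move=> [m1 [M1 h1M]] [m2 [M2 h2M]]; split; first exact: measurable_funD.
exists (M1 + M2) => w; rewrite (le_trans (ler_normD _ _)) // lerD //.
Qed.

Lemma bndM {h1 h2} : bnd h1 -> bnd h2 -> bnd (fun w => h1 w * h2 w).
Proof.
move=> [m1 [M1 h1M]] [m2 [M2 h2M]]; split; first exact: measurable_funM.
exists (M1 * M2) => w; rewrite normrM ler_pM //.
Qed.

Lemma bndN {h} : bnd h -> bnd (fun w => - h w).
Proof.
move=> [m [M hM]]; split; first exact: measurable_funN.
by exists M => w; rewrite normrN.
Qed.

Lemma bndB {h1 h2} : bnd h1 -> bnd h2 -> bnd (fun w => h1 w - h2 w).
Proof. by move=> b1 b2; apply: bndD => //; exact: bndN. Qed.

Lemma bndX (g : T -> R) : measurable_fun setT g -> (forall x, 0 <= g x <= 1) ->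
  bnd (fun w => g (X w)).
Proof.
move=> mg g01; split; first exact: measurableT_comp.
exists 1 => w; have /andP[h0 h1] := g01 (X w).
by rewrite ger0_norm.
Qed.

Lemma real_dens (Z1 : set Omega) (mZ1 : measurable Z1) (a : T -> R)
  (ma : measurable_fun setT a) (a0 : forall x, 0 <= a x)
  (ha : forall B, measurable B ->
     P (X @^-1` B `&` Z1) = (\int[P]_(w in X @^-1` B) (a (X w))%:E)%E)
  (g : T -> R) (cg : classifier g) :
  Rintegral P Z1 (fun w => g (X w)) =
  Rintegral P setT (fun w => a (X w) * g (X w)).
Proof.
case: cg => mg g01.
rewrite /Rintegral (@dens_int Z1 mZ1 a ma a0 ha g mg) //.
by move=> x; case/andP: (g01 x).
Qed.

Lemma div_cancel (q I : R) : (q = 0 -> I = 0) -> q * (I / q) = I.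
Proof.
have [->|q0] := eqVneq q 0; first by move=> ->; rewrite // mul0r.
by move=> _; rewrite mulrCA divff // mulr1.
Qed.

Lemma Rint_null (D : set Omega) (mD : measurable D) (f : Omega -> R) :
  measurable_fun setT f -> fine (P D) = 0 -> Rintegral P D f = 0.
Proof.
move=> mf hD; have PD0 : P D = 0%E.
  by rewrite -[P D]fineK ?hD // fin_num_measure.
rewrite /Rintegral null_set_integral //.
exact/measurable_EFinP/measurable_funTS.
Qed.

Lemma CS_formula (Z1 : set Omega) (mZ1 : measurable Z1) (a : T -> R)
  (ma : measurable_fun setT a) (a01 : forall x, 0 <= a x <= 1)
  (ha : forall B, measurable B ->
     P (X @^-1` B `&` Z1) = (\int[P]_(w in X @^-1` B) (a (X w))%:E)%E)
  (c : R) (g : T -> R) (cg : classifier g) :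
  CS P X g Z1 c = (1 - c) * pZ P Z1 +
    Rintegral P setT (fun w => (c - a (X w)) * g (X w)).
Proof.
have a0 x : 0 <= a x by case/andP: (a01 x).
have bg : bnd (fun w => g (X w)) by case: cg => mg g01; exact: bndX.
have ba : bnd (fun w => a (X w)) by exact: bndX.
have mC : measurable (~` Z1) by exact: measurableC.
have pC : fine (P (~` Z1)) = 1 - pZ P Z1.
  rewrite probability_setC // /pZ fineB //; exact: fin_num_measure.
rewrite /CS /FNR /FPR.
have f1 : pZ P Z1 * (1 - c) * (Rintegral P Z1 (fun w => 1 - g (X w)) / pZ P Z1)
    = (1 - c) * Rintegral P Z1 (fun w => 1 - g (X w)).
  rewrite -mulrA mulrCA div_cancel // => p0.
  by apply: Rint_null => //; case: (bndB (bnd_cst 1) bg).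
have f2 : (1 - pZ P Z1) * c * (Rintegral P (~` Z1) (fun w => g (X w)) / (1 - pZ P Z1))
    = c * Rintegral P (~` Z1) (fun w => g (X w)).
  rewrite -mulrA mulrCA div_cancel // => p0.
  by apply: Rint_null => //; [case: bg | rewrite pC].
rewrite f1 f2.
set J := Rintegral P Z1 (fun w => g (X w)).
have e1 : Rintegral P Z1 (fun w => 1 - g (X w)) = pZ P Z1 - J.
  rewrite RintegralB //; last 2 first.
  - exact: bnd_int (bnd_cst 1).
  - exact: bnd_int bg.
  by rewrite Rintegral_cst // mul1r.
have e2 : Rintegral P (~` Z1) (fun w => g (X w)) =
    Rintegral P setT (fun w => g (X w)) - J.
  rewrite -(setUCr Z1) Rintegral_setU //; first by rewrite -/J addrC addKr.
  - by rewrite setUCr; exact: bnd_int bg.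
  - by rewrite /disj_set setICr.
have e3 : J = Rintegral P setT (fun w => a (X w) * g (X w)).
  exact: real_dens.
have e4 : Rintegral P setT (fun w => (c - a (X w)) * g (X w)) =
    c * Rintegral P setT (fun w => g (X w)) -
    Rintegral P setT (fun w => a (X w) * g (X w)).
  rewrite (@eq_Rintegral _ _ _ P _ (fun w => c * g (X w) - a (X w) * g (X w))); last first.
    by move=> w _; rewrite mulrBl.
  rewrite RintegralB //; last 2 first.
  - exact: bnd_int (bndM (bnd_cst c) bg).
  - exact: bnd_int (bndM ba bg).
  by rewrite RintegralZl //; exact: bnd_int bg.
rewrite e1 e2 e4 -e3.
ring.
Qed.

Lemma ae_Rint_ge0 (h : Omega -> R) (N : set Omega) : bnd h ->
  measurable N -> P N = 0%E -> (forall w, ~ N w -> 0 <= h w) ->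
  0 <= Rintegral P setT h.
Proof.
move=> [mh _] mN PN hN; rewrite /Rintegral.
rewrite (@ae_eq_integral _ _ _ P setT (fun w => (Num.max (h w) 0)%:E)) //.
- by apply: fine_ge0; apply: integral_ge0 => w _; rewrite lee_fin le_max lexx orbT.
- exact/measurable_EFinP.
- apply/measurable_EFinP; apply: measurable_maxr => //; exact: measurable_cst.
- exists N; split => // w /= /not_implyP [_ hw]; apply: contrapT => Nw.
  by apply: hw; rewrite max_l // hN.
Qed.
End dens.
Lemma indic_pos {d} {T : measurableType d} {R : realType} (h : T -> R) x :
  \1_(h @^-1` `]0%R, +oo[) x = (if 0 < h x then 1 else 0) :> R.
Proof.
rewrite /indic; case: ifPn => hp.
  by rewrite mem_set // /= in_itv /= andbT.
rewrite memNset //= in_itv /= andbT; exact/negP.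
Qed.
Lemma indic_neg {d} {T : measurableType d} {R : realType} (h : T -> R) x :
  \1_(h @^-1` `]-oo, 0%R[) x = (if h x < 0 then 1 else 0) :> R.
Proof.
rewrite /indic; case: ifPn => hp.
  by rewrite mem_set // /= in_itv /=.
rewrite memNset //= in_itv /=; exact/negP.
Qed.

Theorem proposition1 (dO dT : measure_display) (Omega : measurableType dO)
  (T : measurableType dT) (R : realType) (P : probability Omega R)
  (X : Omega -> T) (Y1 Yb1 : set Omega)
  (mX : measurable_fun setT X) (mY1 : measurable Y1) (mYb1 : measurable Yb1)
  (eta etaDP : T -> R)
  (heta : is_cond_prob P X Y1 eta) (hetaDP : is_cond_prob P X Yb1 etaDP)
  (c cbar lambda : R) (hc : 0 <= c <= 1) (hcbar : 0 <= cbar <= 1) :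
  let s := fun x => eta x - c - lambda * (etaDP x - cbar) in
  forall f : T -> R,
    is_minimiser P X Y1 Yb1 c cbar lambda f <->
    (classifier f /\
     {ae pushforward P X, forall x, s x != 0 -> f x = (if 0 < s x then 1 else 0)}).
Proof.
move=> s f.
have [meta _] := heta; have [metaDP _] := hetaDP.
pose a := clamp eta; pose b := clamp etaDP.
have ma : measurable_fun setT a := measurable_clamp eta meta.
have mb : measurable_fun setT b := measurable_clamp etaDP metaDP.
have a01 x : 0 <= a x <= 1 by rewrite clamp_ge0 clamp_le1.
have b01 x : 0 <= b x <= 1 by rewrite clamp_ge0 clamp_le1.
have ha := @cond_clamp _ _ _ _ _ P X mX Y1 mY1 eta heta.
have hb := @cond_clamp _ _ _ _ _ P X mX Yb1 mYb1 etaDP hetaDP.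
pose s' := fun x => a x - c - lambda * (b x - cbar).
have ms' : measurable_fun setT s'.
  apply: measurable_funB; first by apply: measurable_funB => //; exact: measurable_cst.
  apply: measurable_funM; first exact: measurable_cst.
  by apply: measurable_funB => //; exact: measurable_cst.
have bs' : bnd (fun w => s' (X w)).
  apply: bndB; first by apply: bndB; [exact: bndX | exact: bnd_cst].
  by apply: bndM; [exact: bnd_cst | apply: bndB; [exact: bndX | exact: bnd_cst]].
have bX (g : T -> R) : classifier g -> bnd (fun w => g (X w)).
  by case=> mg g01; exact: bndX.
pose K := (1 - c) * pZ P Y1 - lambda * ((1 - cbar) * pZ P Yb1).
have RF (g : T -> R) : classifier g -> Rfull P X Y1 Yb1 c cbar lambda g =
    K - Rintegral P setT (fun w => s' (X w) * g (X w)).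
  move=> cg; have bg := bX g cg.
  rewrite /Rfull (@CS_formula _ _ _ _ _ P X mX Y1 mY1 a ma a01 ha c g cg) (@CS_formula _ _ _ _ _ P X mX Yb1 mYb1 b mb b01 hb cbar g cg).
  rewrite [in RHS](@eq_Rintegral _ _ _ P setT (fun w => lambda * ((cbar - b (X w)) * g (X w)) -
       (c - a (X w)) * g (X w))); last by move=> w _; rewrite /s' /=; ring.
  rewrite RintegralB //; last 2 first.
  - apply: bnd_int => //; apply: bndM; first exact: bnd_cst.
    by apply: bndM => //; apply: bndB; [exact: bnd_cst | exact: bndX].
  - by apply: bnd_int => //; apply: bndM => //; apply: bndB; [exact: bnd_cst | exact: bndX].
  rewrite RintegralZl //; last first.
    by apply: bnd_int => //; apply: bndM => //; apply: bndB; [exact: bnd_cst | exact: bndX].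
  rewrite /K; ring.
pose bad := badset eta `|` badset etaDP.
have mbad : measurable bad.
  by apply: measurableU; apply: measurable_badset.
have N0 : P.-negligible (X @^-1` bad).
  rewrite /bad preimage_setU; apply: negligibleU.
    exact: (proj2 (negligibleP P (mpre X mX (measurable_badset eta meta)))
      (@null_badset _ _ _ _ _ P X mX Y1 mY1 eta heta)).
  exact: (proj2 (negligibleP P (mpre X mX (measurable_badset etaDP metaDP)))
      (@null_badset _ _ _ _ _ P X mX Yb1 mYb1 etaDP hetaDP)).
have sE x : ~ bad x -> s' x = s x.
  move=> /not_orP [h1 h2].
  by rewrite /s' /s /a /b !clampE //; exact: notbad.
split.
  case=> cf hmin; split => //.
  have [mf f01] := cf.
  pose A := s' @^-1` `]0%R, +oo[.
  pose B := s' @^-1` `]-oo, 0%R[.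
  have mA : measurable A.
    by rewrite /A -[E in measurable E]setTI; apply: ms' => //; exact: measurable_itv.
  have mB : measurable B.
    by rewrite /B -[E in measurable E]setTI; apply: ms' => //; exact: measurable_itv.
  pose g := fun x => f x + (1 - f x) * \1_A x - f x * \1_B x.
  have gE x : g x = if 0 < s' x then 1 else if s' x < 0 then 0 else f x.
    rewrite /g /A /B indic_pos indic_neg.
    have [sn|sp|s0] := ltgtP (s' x) 0.
    - lra.
    - lra.
    - lra.
  have cg : classifier g.
    split.
    - apply: measurable_funB; first apply: measurable_funD => //.
        apply: measurable_funM; last exact: measurable_indic.
        by apply: measurable_funB => //; exact: measurable_cst.
      by apply: measurable_funM => //; exact: measurable_indic.
    - move=> x; rewrite gE; case: ifP => _; first by rewrite ler01 lexx.
      by case: ifP => _ ; [rewrite lexx ler01 | exact: f01].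
  have bf := bX f cf; have bg := bX g cg.
  have hg := hmin g cg; rewrite !RF // in hg.
  pose H := fun x => s' x * (g x - f x).
  have H0 x : 0 <= H x.
    have /andP[f0 f1] := f01 x.
    rewrite /H gE; have [sn|sp|s0] := ltgtP (s' x) 0.
    - nra.
    - nra.
    - nra.
  have mH : measurable_fun setT H.
    apply: measurable_funM => //; apply: measurable_funB => //; exact: cg.1.
  have bH : bnd (fun w => H (X w)) by apply: bndM => //; exact: bndB.
  have iH : Rintegral P setT (fun w => H (X w)) <= 0.
    rewrite (@eq_Rintegral _ _ _ P setT (fun w => s' (X w) * g (X w) - s' (X w) * f (X w))); last by move=> w _; rewrite /H mulrBr.
    rewrite RintegralB //; first lra.
    - by apply: bnd_int => //; exact: bndM.
    - by apply: bnd_int => //; exact: bndM.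
  have i0 : (\int[P]_w (H (X w))%:E = 0)%E.
    have fin := integrable_fin_num measurableT (bnd_int P measurableT bH).
    have ge : (0 <= \int[P]_w (H (X w))%:E)%E.
      by apply: integral_ge0 => w _; rewrite lee_fin.
    apply/eqP; rewrite eq_le ge andbT -(fineK fin) lee_fin; exact: iH.
  have : (\int[P]_w `|(H (X w))%:E| = 0)%E.
    by rewrite -i0; apply: eq_integral => w _; rewrite gee0_abs // lee_fin.
  move/(ae_eq_integral_abs P measurableT (proj2 (measurable_EFinP _ _) (measurableT_comp mH mX))).
  move=> [N [mN PN sN]].
  pose NT := H @^-1` [set~ 0] `|` bad.
  have mNT : measurable NT.
    apply: measurableU => //; rewrite -[E in measurable E]setTI; apply: mH => //.
    by apply: measurableC; exact: measurable_set1.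
  exists NT; split => //.
  - rewrite /pushforward; apply: (proj1 (negligibleP P (mpre X mX mNT))).
    rewrite /NT preimage_setU; apply: negligibleU => //.
    exists N; split => // w /= Hw; apply: sN => /(_ I) [h]; exact: Hw h.
  - move=> x /= hx; apply: contrapT => nNT; apply: hx => sx0.
    move/not_orP: nNT => [nH nbad].
    have Hx : H x = 0 by apply: contrapT.
    have s'x : s' x = s x := sE x nbad.
    have gf : g x = f x.
      move/eqP: Hx; rewrite /H mulf_eq0 s'x (negbTE sx0) /= subr_eq0.
      by move/eqP.
    rewrite -gf gE s'x.
    have [sn|sp|s0] := ltgtP (s x) 0.
    + by [].
    + by [].
    + by move: sx0; rewrite s0 eqxx.
case=> cf hae; split => // g cg.
have bf := bX f cf; have bg := bX g cg.
rewrite !RF //.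
suff H : 0 <= Rintegral P setT (fun w => s' (X w) * (f (X w) - g (X w))).
  move: H; rewrite (@eq_Rintegral _ _ _ P setT (fun w => s' (X w) * f (X w) - s' (X w) * g (X w))); last by move=> w _; rewrite mulrBr.
  rewrite RintegralB //; first lra.
  - by apply: bnd_int => //; exact: bndM.
  - by apply: bnd_int => //; exact: bndM.
case: hae => NT [mNT PNT sNT].
have mN : measurable (X @^-1` (NT `|` bad)) := mpre X mX (measurableU _ _ mNT mbad).
apply: (@ae_Rint_ge0 _ _ _ P _ (X @^-1` (NT `|` bad))).
- by apply: bndM => //; exact: bndB.
- exact: mN.
- apply: (proj1 (negligibleP P mN)); rewrite preimage_setU; apply: negligibleU => //.
  by exists (X @^-1` NT); split => //; exact: mpre.
move=> w /= /not_orP [nNT nbad].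
have hcond : s (X w) != 0 -> f (X w) = (if 0 < s (X w) then 1 else 0).
  by apply: contrapT => hn; apply: nNT; apply: sNT; exact: hn.
rewrite sE //.
have /andP[f0 f1] := cf.2 (X w); have /andP[g0 g1] := cg.2 (X w).
have [sn|sp|s0] := ltgtP (s (X w)) 0.
- rewrite hcond ?lt_eqF // (lt_gtF sn); nra.
- by rewrite hcond ?gt_eqF // sp; apply: mulr_ge0; [exact: ltW | rewrite subr_ge0].
- by rewrite s0 mul0r.
Qed.
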